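(* Let $\mathcal{G}=(\mathcal{N}_0,\mathcal{E})$ be a tree (radial distribution network) with node set $\mathcal{N}_0=\{0,1,\dots,n\}$, where node $0$ is the substation, and let $\mathcal{N}=\mathcal{N}_0\setminus\{0\}$. Each line $(h,k)\in\mathcal{E}$ has reactance $x_{hk}>0$. Define the $n\times n$ matrix $X$ by $X_{ij}=2\sum_{(h,k)\in P_i\cap P_j} x_{hk}$ for $i,j\in\mathcal{N}$, where $P_i$ is the set of lines on the unique path from node $0$ to node $i$. For each $i\in\mathcal{N}$ let $\underline{v}_i\le \bar{v}_i$ be given bounds, and let $g_i:\mathbb{R}\to\mathbb{R}$ be a decentralized control policy. Consider the closed-loop voltage dynamics $$\mathbf{v}(t)=X\mathbf{q}(t)+\mathbf{v}^{env},\qquad \dot{q}_i(t)=u_i(t)=g_i(v_i(t)),\quad i\in\mathcal{N},$$ where $\mathbf{v}^{env}\in\mathbb{R}^n$ is a constant vector, $\mathbf{q}(t)\in\mathbb{R}^n$ is the reactive power injection and $\mathbf{v}(t)\in\mathbb{R}^n$ the voltage magnitude vector. Suppose that for every $i\in\mathcal{N}$, $g_i$ is continuously differentiable, satisfies $g_i(v_i)=0$ for $v_i\in[\underline{v}_i,\bar{v}_i]$, is strictly monotonically decreasing on $(-\infty,\underline{v}_i]$ and on $[\bar{v}_i,\infty)$, and satisfies $\lim_{v_i\to\infty}|g_i(v_i)|=\infty$. Then the closed-loop system is voltage stable: for any $\mathbf{v}^{env}\in\mathbb{R}^n$ and any initial condition $\mathbf{v}(0)\in\mathbb{R}^n$,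 the trajectory satisfies $\lim_{t\to\infty}\mathrm{dist}(\mathbf{v}(t),S_v)=0$, where $S_v=\{\mathbf{v}\in\mathbb{R}^n:\underline{v}_i\le v_i\le \bar{v}_i \text{ for all } i\}$ and $\mathrm{dist}(\mathbf{v},S_v)=\min_{\mathbf{v}'\in S_v}\|\mathbf{v}-\mathbf{v}'\|$.
   Context: This is the linearized (Simplified DistFlow) model of a radial power distribution network: the voltage vector equals $X\mathbf{q}+\mathbf{v}^{env}$, where $\mathbf{v}^{env}$ collects the uncontrollable contributions (from active power injections and substation voltage), and each node's controller sets the rate of change of its reactive power injection as a function of its own local voltage only. In the paper the policies $g_i$ are parameterized as $g_{i,\theta_i}$ with parameters $\theta_i$; the parameterization plays no role in the statement. *)

(* Defs.v *)
From HB Require Import structures.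
From mathcomp Require Import all_boot all_order all_algebra.
From mathcomp Require Import all_classical all_reals all_analysis.
Set Implicit Arguments. Unset Strict Implicit. Unset Printing Implicit Defensive.
Import Order.TTheory GRing.Theory Num.Theory.
Import numFieldNormedType.Exports.
Local Open Scope ring_scope.
Local Open Scope classical_set_scope.

(* A tree on nodes {0,...,n} (type 'I_n.+1), rooted at the substation 0,
   given by a parent map: the lines are (par k, k) for k <> 0. *)
Definition is_rooted_tree (n : nat) (par : 'I_n.+1 -> 'I_n.+1) : Prop :=
  par ord0 = ord0 /\ forall i : 'I_n.+1, exists k : nat, iter k par i = ord0.

(* Node j <> 0 lies on the path from 0 to i, i.e. the line (par j, j)
   belongs to P_i.  (Ancestors are reached in at most n steps.) *)
Definition on_path (n : nat) (par : 'I_n.+1 -> 'I_n.+1) (i j : 'I_n.+1) : bool :=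
  (j != ord0) && [exists k : 'I_n.+1, iter k par i == j].

(* Non-substation node number i+1, for i : 'I_n. *)
Definition node (n : nat) (i : 'I_n) : 'I_n.+1 := lift ord0 i.

(* X_ij = 2 * sum of reactances of lines in P_i ∩ P_j;
   x k is the reactance of line (par k, k). *)
Definition Xmat (R : realType) (n : nat) (par : 'I_n.+1 -> 'I_n.+1)
    (x : 'I_n.+1 -> R) : 'M[R]_n :=
  \matrix_(i < n, j < n)
    (2 * \sum_(k < n.+1 | on_path par (node i) k && on_path par (node j) k) x k).

Definition enorm (R : realType) (n : nat) (v : 'cV[R]_n) : R :=
  Num.sqrt (\sum_(i < n) v i 0 ^+ 2).

Definition Sv (R : realType) (n : nat) (vlo vhi : 'I_n -> R) : set 'cV[R]_n :=
  [set v | forall i, vlo i <= v i 0 <= vhi i].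

Definition dist_set (R : realType) (n : nat) (v : 'cV[R]_n) (S : set 'cV[R]_n) : R :=
  inf [set enorm (v - w) | w in S].

(* Main.v *)
Require Import Defs.
From HB Require Import structures.
From mathcomp Require Import all_boot all_order all_algebra.
From mathcomp Require Import all_classical all_reals all_analysis.
From mathcomp Require Import ring lra.
Import Order.TTheory GRing.Theory Num.Theory.
Import numFieldNormedType.Exports.
Local Open Scope ring_scope.
Local Open Scope classical_set_scope.

Definition aa (R : realType) n (par : 'I_n.+1 -> 'I_n.+1) (k : 'I_n.+1) (i : 'I_n) : R :=
  (on_path par (node i) k)%:R.
Arguments aa R {n} par k i.
Definition yy (R : realType) n (par : 'I_n.+1 -> 'I_n.+1) (w : 'I_n -> R) k : R :=
  \sum_i aa R par k i * w i.

Arguments yy {R n} par w k.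

Lemma XE (R : realType) n par (x : 'I_n.+1 -> R) i j :
  Xmat par x i j = \sum_k 2 * x k * aa R par k i * aa R par k j.
Proof.
rewrite mxE big_mkcond mulr_sumr /=; apply: eq_bigr => k _.
rewrite /aa; case: (on_path _ _ k); case: (on_path _ _ k) => /=;
  by rewrite ?mulr1 ?mulr0.
Qed.

Lemma Xsym (R : realType) n par (x : 'I_n.+1 -> R) i j :
  Xmat par x i j = Xmat par x j i.
Proof. by rewrite !XE; apply: eq_bigr => k _; ring. Qed.

Lemma XwE (R : realType) n par (x : 'I_n.+1 -> R) (w : 'I_n -> R) j :
  \sum_i Xmat par x j i * w i = \sum_k 2 * x k * aa R par k j * yy par w k.
Proof.
rewrite (eq_bigr (fun i => \sum_k 2 * x k * aa R par k j * (aa R par k i * w i))); last first.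
  by move=> i _; rewrite XE mulr_suml; apply: eq_bigr => k _; ring.
by rewrite exchange_big; apply: eq_bigr => k _; rewrite /yy mulr_sumr.
Qed.

Lemma QE (R : realType) n par (x : 'I_n.+1 -> R) (w : 'I_n -> R) :
  \sum_j w j * \sum_i Xmat par x j i * w i = \sum_k 2 * x k * yy par w k ^+ 2.
Proof.
under eq_bigr do rewrite XwE mulr_sumr.
rewrite exchange_big; apply: eq_bigr => k _.
have -> : 2 * x k * yy par w k ^+ 2 = \sum_j (2 * x k * yy par w k) * (aa R par k j * w j).
  by rewrite -mulr_sumr expr2 mulrA.
by apply: eq_bigr => j _; ring.
Qed.

Lemma aa0 (R : realType) n par (i : 'I_n) : aa R par ord0 i = 0.
Proof. by rewrite /aa /on_path eqxx. Qed.

Lemma yy0 (R : realType) n par (w : 'I_n -> R) : yy par w ord0 = 0.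
Proof. rewrite /yy big1 // => i _; rewrite aa0; exact: mul0r. Qed.

Lemma Qterm_ge0 (R : realType) n (x : 'I_n.+1 -> R) (k : 'I_n.+1) (z : R) :
  (forall k : 'I_n.+1, k != ord0 -> 0 < x k) -> (k = ord0 -> z = 0) ->
  0 <= 2 * x k * z ^+ 2.
Proof.
move=> hx hz; case: (eqVneq k ord0) => [/hz -> |/hx xk]; first by rewrite expr0n mulr0.
by rewrite mulr_ge0 ?sqr_ge0 // mulr_ge0 // ltW.
Qed.

Lemma Q_ge0 (R : realType) n par (x : 'I_n.+1 -> R) (w : 'I_n -> R) :
  (forall k : 'I_n.+1, k != ord0 -> 0 < x k) ->
  0 <= \sum_j w j * \sum_i Xmat par x j i * w i.
Proof.
move=> hx; rewrite QE sumr_ge0 // => k _; apply: Qterm_ge0 => // ->.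
exact: yy0.
Qed.

Lemma quad_lem (R : realType) (A B D : R) : 0 <= D ->
  (forall s, 0 <= A - 2 * s * B + s ^+ 2 * D) -> B ^+ 2 <= (D + 1) * A.
Proof.
move=> D0 h; have A0 : 0 <= A by have := h 0; rewrite expr0n /=; lra.
have := h (B / (D + 1)).
have D1 : 0 < D + 1 by lra.
set s := B / (D + 1).
have hs : s * (D + 1) = B by rewrite /s mulfVK // gt_eqF.
move=> hh.
have : 0 <= (A - 2 * s * B + s ^+ 2 * D) * (D + 1) by rewrite mulr_ge0 // ltW.
rewrite -hs; nra.
Qed.

Lemma CS_X (R : realType) n par (x : 'I_n.+1 -> R) (w : 'I_n -> R) j :
  (forall k : 'I_n.+1, k != ord0 -> 0 < x k) ->
  (\sum_i Xmat par x j i * w i) ^+ 2 <=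
    (Xmat par x j j + 1) * \sum_j w j * \sum_i Xmat par x j i * w i.
Proof.
move=> hx; apply: quad_lem.
  rewrite XE sumr_ge0 // => k _; rewrite -mulrA -expr2; apply: Qterm_ge0 => // ->.
  by rewrite aa0.
move=> s; rewrite QE XwE XE.
have -> : \sum_k 2 * x k * yy par w k ^+ 2 - 2 * s * (\sum_k 2 * x k * aa R par k j * yy par w k)
   + s ^+ 2 * (\sum_k 2 * x k * aa R par k j * aa R par k j)
   = \sum_k 2 * x k * (yy par w k - s * aa R par k j) ^+ 2.
  rewrite !mulr_sumr -sumrB -big_split /=; apply: eq_bigr => k _; ring.
rewrite sumr_ge0 // => k _; apply: Qterm_ge0 => // ->.
by rewrite yy0 aa0 mulr0 subr0.
Qed.

Lemma tree_kernel (R : realType) n (par : 'I_n.+1 -> 'I_n.+1) (w : 'I_n -> R) :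
  is_rooted_tree par -> (forall k, k != ord0 -> yy par w k = 0) -> forall i, w i = 0.
Proof.
move=> Ht hy i.
have ex m : exists k, iter k par m == ord0.
  by case: (Ht.2 m) => k hk; exists k; apply/eqP.
pose D m := ex_minn (ex m).
have Dpar m : m != ord0 -> (D (par m) < D m)%N.
  move=> hm; rewrite /D; case: ex_minnP => a Ha mina; case: ex_minnP => b Hb _.
  case: b Hb => [|b] Hb; first by rewrite /= in Hb; rewrite Hb in hm.
  by rewrite iterSr in Hb; rewrite ltnS; apply: mina.
have Diter m b : iter b par m != ord0 -> (D (iter b par m) + b <= D m)%N.
  elim: b => [|b IH] /=; first by rewrite addn0.
  move=> hb; have hb' : iter b par m != ord0.
    by apply: contra hb => /eqP ->; apply/eqP; exact: Ht.1.
  rewrite addnS; apply: leq_trans (IH hb'); rewrite ltn_add2r; exact: Dpar.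
have Danc m k : on_path par m k -> k != m -> (D k < D m)%N.
  case/andP => k0 /existsP[a /eqP ha] km.
  have a0 : (a : nat) != 0%N by apply: contra km => /eqP a0; rewrite -ha a0.
  have := Diter m a; rewrite ha => /(_ k0).
  by case: (a : nat) a0 => [|a'] //= _ h; apply: leq_trans h; rewrite addnS ltnS leq_addr.
have nodeN0 j : node j != ord0 :> 'I_n.+1 by rewrite eq_sym neq_lift.
apply/eqP; apply: contraT => wi.
case: (@arg_maxnP _ i (fun j => w j != 0) (fun j => D (node j)) wi) => i0 wi0 maxi0.
have : yy par w (node i0) = w i0.
  rewrite /yy (bigD1 i0) //= big1 ?addr0.
    rewrite /aa; have -> : on_path par (node i0) (node i0).
      by rewrite /on_path nodeN0 /=; apply/existsP; exists ord0.
    by rewrite mul1r.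
  move=> j ji0; rewrite /aa; case hp: (on_path _ _ _); last by rewrite mul0r.
  have nn : node i0 != node j by rewrite (inj_eq (@lift_inj _ ord0)) eq_sym.
  have := Danc _ _ hp nn => lt.
  case: (eqVneq (w j) 0) => [->|wj]; first by rewrite mulr0.
  by have := maxi0 j wj => /=; rewrite leqNgt lt.
by rewrite hy // => /esym/eqP; rewrite (negbTE wi0).
Qed.

Lemma X_unit (R : realType) n (par : 'I_n.+1 -> 'I_n.+1) (x : 'I_n.+1 -> R) :
  is_rooted_tree par -> (forall k : 'I_n.+1, k != ord0 -> 0 < x k) ->
  Xmat par x \in unitmx.
Proof.
move=> Ht hx; rewrite -row_free_unit; apply: inj_row_free => v hv.
pose w : 'I_n -> R := fun i => v 0 i.
have hXw j : \sum_i Xmat par x j i * w i = 0.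
  have h := congr1 (fun (M : 'M[R]_(1, n)) => M 0 j) hv; rewrite /= !mxE in h; apply: (etrans _ h).
  by apply: eq_bigr => i _; rewrite /w Xsym mulrC.
have hQ : \sum_k 2 * x k * yy par w k ^+ 2 = 0.
  by rewrite -QE big1 // => j _; rewrite hXw mulr0.
have hy k : k != ord0 -> yy par w k = 0.
  move=> k0; have hge : forall j, true -> 0 <= 2 * x j * yy par w j ^+ 2.
    by move=> j _; apply: Qterm_ge0 => // ->; exact: yy0.
  have := psumr_eq0P hge hQ (i:=k) isT; have xk := hx k k0.
  move/eqP; rewrite mulf_eq0 sqrf_eq0 mulf_eq0 pnatr_eq0 /= gt_eqF //=.
  by move/eqP.
apply/rowP => i; rewrite [RHS]mxE; exact: (@tree_kernel R n par w Ht hy i).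
Qed.

Lemma mvt_le (R : realType) (f df : R -> R) (a b K : R) :
  0 < a -> a <= b -> (forall t : R, 0 < t -> is_derive t 1 f (df t)) ->
  (forall t : R, a < t < b -> df t <= K) -> f b - f a <= K * (b - a).
Proof.
move=> a0 ab hd hK; case: (eqVneq a b) => [->|neq]; first by rewrite !subrr mulr0.
have altb : a < b by rewrite lt_neqAle neq ab.
have h1 : forall t, t \in `]a, b[%R -> is_derive t 1 f (df t).
  move=> t; rewrite in_itv /= => /andP[hat _]; apply: hd; exact: lt_trans hat.
have h2 : {within `[a, b], continuous f}.
  apply: derivable_within_continuous => t; rewrite in_itv /= => /andP[hat _].
  by case: (hd t (lt_le_trans a0 hat)).
have [c cin ->] := @MVT R f df a b altb h1 h2.
by rewrite ler_wpM2r ?subr_ge0 //; apply: hK; move: cin; rewrite in_itv.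
Qed.

Lemma mvt_ge (R : realType) (f df : R -> R) (a b K : R) :
  0 < a -> a <= b -> (forall t : R, 0 < t -> is_derive t 1 f (df t)) ->
  (forall t : R, a < t < b -> K <= df t) -> K * (b - a) <= f b - f a.
Proof.
move=> a0 ab hd hK; case: (eqVneq a b) => [->|neq]; first by rewrite !subrr mulr0.
have altb : a < b by rewrite lt_neqAle neq ab.
have h1 : forall t, t \in `]a, b[%R -> is_derive t 1 f (df t).
  move=> t; rewrite in_itv /= => /andP[hat _]; apply: hd; exact: lt_trans hat.
have h2 : {within `[a, b], continuous f}.
  apply: derivable_within_continuous => t; rewrite in_itv /= => /andP[hat _].
  by case: (hd t (lt_le_trans a0 hat)).
have [c cin ->] := @MVT R f df a b altb h1 h2.
by rewrite ler_wpM2r ?subr_ge0 //; apply: hK; move: cin; rewrite in_itv.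
Qed.

Lemma abs_le_sq1 (R : realType) (a : R) : `|a| <= a ^+ 2 + 1.
Proof.
have h1 := sqr_ge0 (`|a| - 1); have h2 : `|a| ^+ 2 = a ^+ 2 by rewrite real_normK ?num_real.
have h3 := normr_ge0 a; nra.
Qed.

Lemma pos_lb_family (R : realType) n (d : 'I_n -> R) :
  (forall i, 0 < d i) -> exists2 del : R, 0 < del & forall i, del <= d i.
Proof.
move=> hd; have hs : 0 <= \sum_i (d i)^-1 by apply: sumr_ge0 => i _; rewrite invr_ge0 ltW.
exists (\sum_i (d i)^-1 + 1)^-1; first by rewrite invr_gt0; lra.
move=> i; rewrite -[d i]invrK lef_pV2 ?posrE ?invr_gt0 //; last by lra.
by rewrite (bigD1 i) //= -addrA lerDl; apply: addr_ge0 => //; apply: sumr_ge0 => j _; rewrite invr_ge0 ltW.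
Qed.

Lemma Xdiag_ge0 (R : realType) n par (x : 'I_n.+1 -> R) j :
  (forall k : 'I_n.+1, k != ord0 -> 0 < x k) -> 0 <= Xmat par x j j.
Proof.
move=> hx; rewrite XE sumr_ge0 // => k _; rewrite -mulrA -expr2; apply: Qterm_ge0 => // ->.
by rewrite aa0.
Qed.

Theorem theorem1 (R : realType) (n : nat)
  (par : 'I_n.+1 -> 'I_n.+1) (x : 'I_n.+1 -> R)
  (vlo vhi : 'I_n -> R) (g : 'I_n -> R -> R) :
  is_rooted_tree par ->
  (forall k : 'I_n.+1, k != ord0 -> 0 < x k) ->
  (forall i, vlo i <= vhi i) ->
  (forall i, (forall v : R, derivable (g i) v 1) /\ continuous (g i)^`()) ->
  (forall i (v : R), vlo i <= v <= vhi i -> g i v = 0) ->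
  (forall i (a b : R), a < b -> b <= vlo i -> g i b < g i a) ->
  (forall i (a b : R), vhi i <= a -> a < b -> g i b < g i a) ->
  (forall i, (fun v => `|g i v|) w @[w --> +oo] --> +oo) ->
  forall (venv : 'cV[R]_n) (q : R -> 'cV[R]_n),
    (forall i, (fun s => q s i 0) t @[t --> 0^'+] --> q 0 i 0) ->
    (forall i (t : R), 0 < t ->
       is_derive t 1 (fun s => q s i 0)
                 (g i ((Xmat par x *m q t + venv) i 0))) ->
    dist_set (Xmat par x *m q t + venv) (Sv vlo vhi) @[t --> +oo] --> 0.
Proof.
move=> Ht hx hlohi _ hmid hdlo hdhi _ venv q _ hq.
have gpos i y : y <= vhi i -> 0 <= g i y.
  move=> yh; case: (ltP y (vlo i)) => [ylt|yge]; last by rewrite hmid ?yge.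
  have := hdlo i y (vlo i) ylt (lexx _); rewrite (hmid i (vlo i)) ?lexx ?hlohi //; exact: ltW.
have gneg i y : vlo i <= y -> g i y <= 0.
  move=> yl; case: (ltP (vhi i) y) => [ygt|yle]; last by rewrite hmid ?yl.
  have := hdhi i (vhi i) y (lexx _) ygt; rewrite (hmid i (vhi i)) ?lexx ?hlohi //; exact: ltW.
have gdec i a b : a <= b -> g i b <= g i a.
  move=> ab; case: (eqVneq a b) => [->//|ne]; have altb : a < b by rewrite lt_neqAle ne ab.
  case: (leP b (vlo i)) => hb; first exact/ltW/hdlo.
  case: (leP (vhi i) a) => ha; first exact/ltW/hdhi.
  exact: le_trans (gneg i b (ltW hb)) (gpos i a (ltW ha)).
have term i y : g i y * (y - vlo i) <= 0.
  case: (leP (vlo i) y) => hy.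
    by apply: mulr_le0_ge0; [exact: gneg | rewrite subr_ge0].
  have := gpos i y (le_trans (ltW hy) (hlohi i)); nra.
have Xu := @X_unit R n par x Ht hx.
pose vs : 'cV[R]_n := \col_i vlo i.
pose qs := invmx (Xmat par x) *m (vs - venv).
have Xqs : Xmat par x *m qs = vs - venv by rewrite /qs mulmxA mulmxV // mul1mx.
pose vi (t : R) (i : 'I_n) : R := (Xmat par x *m q t + venv) i 0.
pose wq t i := q t i 0 - qs i 0.
have viE t i : vi t i - vlo i = \sum_j Xmat par x i j * wq t j.
  under eq_bigr do rewrite mulrBr.
  rewrite sumrB; have := congr1 (fun M : 'cV[R]_n => M i 0) Xqs; rewrite /= !mxE => ->.
  rewrite /vi !mxE; lra.
pose V t := \sum_i wq t i * (vi t i - vlo i).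
have VE t : V t = \sum_j wq t j * \sum_i Xmat par x j i * wq t i.
  by apply: eq_bigr => j _; rewrite viE.
have V0 t : 0 <= V t by rewrite VE; exact: Q_ge0.
have vsq t j : (vi t j - vlo j) ^+ 2 <= (Xmat par x j j + 1) * V t.
  by rewrite viE VE; exact: CS_X.

have dvi (t : R) i : 0 < t -> is_derive t 1 (fun s => vi s i)
                 (\sum_j Xmat par x i j * g j (vi t j)).
  move=> t0.
  have -> : (fun s => vi s i) = \sum_j (fun s => Xmat par x i j * q s j 0) + cst (venv i 0).
    by apply/funext => s; rewrite /vi !mxE fct_sumE.
  rewrite -[X in is_derive _ _ _ X]addr0.
  apply: is_deriveD.
  apply: is_derive_sum => j.
  exact: (is_deriveZ (Xmat par x i j) (hq j t t0)).
pose P (t : R) := \sum_i g i (vi t i) * (vi t i - vlo i).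
have dV (t : R) : 0 < t -> is_derive t 1 V (2 * P t).
  move=> t0.
  have -> : V = \sum_i ((fun s => wq s i) * (fun s => vi s i - vlo i)).
    by apply/funext => s; rewrite /V fct_sumE.
  apply: is_derive_eq.
    apply: is_derive_sum => i.
    have hw : is_derive t 1 (fun s => wq s i) (g i (vi t i)).
      have -> : (fun s => wq s i) = (fun s => q s i 0) - cst (qs i 0) by apply/funext.
      rewrite -[X in is_derive _ _ _ X]subr0; apply: is_deriveB; exact: hq.
    have hv : is_derive t 1 (fun s => vi s i - vlo i) (\sum_j Xmat par x i j * g j (vi t j)).
      have -> : (fun s => vi s i - vlo i) = (fun s => vi s i) - cst (vlo i) by apply/funext.
      rewrite -[X in is_derive _ _ _ X]subr0; apply: is_deriveB; exact: dvi.
    exact: (is_deriveM hw hv).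
  rewrite big_split /=.
  have eA : \sum_i wq t i *: \sum_j Xmat par x i j * g j (vi t j) = P t.
    rewrite /P; under eq_bigr do rewrite [_ *: _]mulr_sumr.
    rewrite exchange_big /=; apply: eq_bigr => j _.
    rewrite viE mulr_sumr; apply: eq_bigr => i _.
    rewrite (Xsym R n par x j i) /=; ring.
  have eB : \sum_i (vi t i - vlo i) *: g i (vi t i) = P t.
    by apply: eq_bigr => i _; rewrite /= mulrC.
  rewrite eA eB; ring.
have P0 (t : R) : P t <= 0 by apply: sumr_le0 => i _; exact: term.
have Vmono (s t : R) : 0 < s -> s <= t -> V t <= V s.
  move=> s0 st; have := @mvt_le R V (fun u => 2 * P u) s t 0 s0 st dV.
  have : forall u, s < u < t -> 2 * P u <= 0 by move=> u _; have := P0 u; lra.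
  move=> h /(_ h); lra.

have Xd0 j : 0 <= Xmat par x j j := @Xdiag_ge0 R n par x j hx.
pose B j := (Xmat par x j j + 1) * V 1 + 1.
have B0 j : 0 <= B j by rewrite /B; have := V0 1; have := Xd0 j; nra.
have vb (t : R) j : 1 <= t -> `|vi t j - vlo j| <= B j.
  move=> t1; apply: le_trans (@abs_le_sq1 R _) _; rewrite /B lerD2r.
  apply: le_trans (vsq t j) _; apply: ler_wpM2l; first by have := Xd0 j; lra.
  by apply: Vmono => //; lra.
pose G j := g j (vlo j - B j) - g j (vlo j + B j).
have gb (t : R) j : 1 <= t -> `|g j (vi t j)| <= G j.
  move=> t1; have := vb t j t1; rewrite ler_norml => /andP[h1 h2].
  have l1 : vlo j - B j <= vi t j by lra.
  have l2 : vi t j <= vlo j + B j by lra.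
  have := gdec j _ _ l1; have := gdec j _ _ l2.
  have l3 : vlo j - B j <= vhi j by have := B0 j; have := hlohi j; lra.
  have l4 : vlo j <= vlo j + B j by have := B0 j; lra.
  have := gpos j (vlo j - B j) l3; have := gneg j (vlo j + B j) l4.
  rewrite ler_norml /G => ha hb hc hd; apply/andP; split; lra.
have G0 j : 0 <= G j by apply: le_trans (normr_ge0 _) (gb 1 j (lexx 1)).
pose Mi i := \sum_j `|Xmat par x i j| * G j.
have Mi0 i : 0 <= Mi i by apply: sumr_ge0 => j _; apply: mulr_ge0.
have dvb (t : R) i : 1 <= t -> `|\sum_j Xmat par x i j * g j (vi t j)| <= Mi i.
  move=> t1; apply: le_trans (ler_norm_sum _ _ _) _; apply: ler_sum => j _.
  rewrite normrM; apply: ler_wpM2l => //; exact: gb.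
have dvi' i (u : R) : 0 < u -> is_derive u 1 (fun u => vi u i)
     ((fun u => \sum_j Xmat par x i j * g j (vi u j)) u) by move=> u0; exact: dvi.
have lipU (t s : R) i : 1 <= t -> t <= s -> vi s i - vi t i <= Mi i * (s - t).
  move=> t1 ts; have t0 : 0 < t by lra.
  apply: (@mvt_le R (fun u => vi u i) _ t s (Mi i) t0 ts (dvi' i)).
  move=> u /andP[tu _]; have := dvb u i (ltW (le_lt_trans t1 tu)).
  by rewrite ler_norml => /andP[_ ->].
have lipL (t s : R) i : 1 <= t -> t <= s -> - Mi i * (s - t) <= vi s i - vi t i.
  move=> t1 ts; have t0 : 0 < t by lra.
  apply: (@mvt_ge R (fun u => vi u i) _ t s (- Mi i) t0 ts (dvi' i)).
  move=> u /andP[tu _]; have := dvb u i (ltW (le_lt_trans t1 tu)).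
  by rewrite ler_norml => /andP[-> _].
pose E := [set V s | s in [set s : R | 1 <= s]].
have Elb : has_lbound E by exists 0 => _ [s _ <-]; exact: V0.
have Einf : has_inf E by split => //; exists (V 1); exists 1 => //=.
pose m := inf E.
have mle (s : R) : 1 <= s -> m <= V s by move=> s1; apply: (ge_inf Elb); exists s.

apply/cvgrPdist_lt => e e0.
have Npos : 0 < n.+1%:R :> R by rewrite ltr0n.
pose eps := e / n.+1%:R.
have eps0 : 0 < eps by rewrite /eps divr_gt0.
pose ep := eps / 2.
have epsE : eps = ep + ep by rewrite /ep -splitr.
have ep0 : 0 < ep by rewrite /ep divr_gt0.
pose clo i := g i (vlo i - ep).
pose chi i := - g i (vhi i + ep).
have clo0 i : 0 < clo i.
  have := hdlo i (vlo i - ep) (vlo i) ltac:(lra) (lexx _).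
  by rewrite (hmid i (vlo i)) ?lexx ?hlohi.
have chi0 i : 0 < chi i.
  have := hdhi i (vhi i) (vhi i + ep) (lexx _) ltac:(lra).
  by rewrite (hmid i (vhi i)) ?lexx ?hlohi //; rewrite /chi oppr_gt0.
pose tau i := ep / (Mi i + 1).
have tau0 i : 0 < tau i by rewrite /tau divr_gt0 //; have := Mi0 i; lra.
have Mtau i : Mi i * tau i <= ep.
  rewrite /tau mulrA ler_pdivrMr; last by have := Mi0 i; lra.
  by have := Mi0 i; nra.
pose d i := ep * Num.min (clo i) (chi i) * tau i.
have d0 i : 0 < d i by apply: mulr_gt0; [apply: mulr_gt0 => //; rewrite lt_min clo0 chi0 | exact: tau0].
have [del del0 deld] := @pos_lb_family R n d d0.
have [_ [T T1 <-] VT] := inf_adherent del0 Einf.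
exists T; split; first exact: num_real.
move=> t Tt.
have t1 : 1 <= t by apply: ltW; apply: le_lt_trans Tt.
have T1' : 1 <= T := T1.
have VtT : V t <= V T by apply: Vmono => //; [lra | exact: ltW].
have key i K : 0 < K -> Num.min (clo i) (chi i) <= K ->
   (forall u, t < u < t + tau i -> 2 * P u <= - 2 * ep * K) -> False.
  move=> K0 hK hP.
  have h := @mvt_le R V (fun u => 2 * P u) t (t + tau i) (- 2 * ep * K) ltac:(lra)
    ltac:(have := tau0 i; lra) dV hP.
  have hm := mle (t + tau i) ltac:(have := tau0 i; lra).
  have hdK : d i <= ep * K * tau i.
    by rewrite /d ler_wpM2r ?ler_wpM2l //; [exact: ltW | exact: ltW].
  have := deld i.
  have e2 : - 2 * ep * K * (t + tau i - t) = - 2 * (ep * K * tau i) by ring.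
  rewrite e2 in h.
  rewrite /m in hm VT; lra.
have Pi u i : P u <= g i (vi u i) * (vi u i - vlo i).
  rewrite /P (bigD1 i) //=; suff : \sum_(j < n | j != i) g j (vi u j) * (vi u j - vlo j) <= 0 by lra.
  apply: sumr_le0 => j _; exact: term.
have box i : vlo i - eps <= vi t i <= vhi i + eps.
  apply/andP; split; rewrite leNgt; apply/negP => bad.
    apply: (key i (clo i) (clo0 i) ltac:(by rewrite ge_min lexx)) => u /andP[tu ut].
    have hu := lipU t u i t1 (ltW tu).
    have : Mi i * (u - t) <= Mi i * tau i by apply: ler_wpM2l => //; lra.
    have := Mtau i => h1 h2.
    have vu : vi u i <= vlo i - ep by lra.
    have gu : clo i <= g i (vi u i) by apply: gdec.
    have := clo0 i; have := Pi u i; nra.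
  apply: (key i (chi i) (chi0 i) ltac:(by rewrite ge_min lexx orbT)) => u /andP[tu ut].
  have hu := lipL t u i t1 (ltW tu).
  have : Mi i * (u - t) <= Mi i * tau i by apply: ler_wpM2l => //; lra.
  have := Mtau i => h1 h2.
  have vu : vhi i + ep <= vi u i by lra.
  have gu : g i (vi u i) <= - chi i by rewrite /chi opprK; apply: gdec.
  have := chi0 i; have := Pi u i; have := hlohi i; nra.

pose v := Xmat par x *m q t + venv.
pose w : 'cV[R]_n := \col_i (if vi t i < vlo i then vlo i
                             else if vhi i < vi t i then vhi i else vi t i).
have wS : Sv vlo vhi w.
  move=> i; rewrite mxE; have := hlohi i.
  case: ifPn => h1; [|case: ifPn => h2; [|rewrite -leNgt in h2]];
    rewrite -?leNgt in h1; move=> hl; apply/andP; split; lra.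
have subE (A C : 'cV[R]_n) i : (A - C) i 0 = A i 0 - C i 0 by rewrite !mxE.
have wd i : (v - w) i 0 ^+ 2 <= eps ^+ 2.
  have hz : forall z : R, - eps <= z <= eps -> z ^+ 2 <= eps ^+ 2.
    by move=> z /andP[z1 z2]; nra.
  have /andP[b1 b2] := box i; have hl := hlohi i.
  rewrite subE [w i 0]mxE; apply: hz.
  have -> : v i 0 = vi t i by [].
  case: ifPn => h1; first by apply/andP; split; lra.
  rewrite -leNgt in h1.
  case: ifPn => h2; first by apply/andP; split; lra.
  rewrite -leNgt in h2; apply/andP; split; lra.
have hs : \sum_i (v - w) i 0 ^+ 2 <= eps ^+ 2 *+ n.
  by rewrite -[n in _ *+ n]card_ord -sumr_const; apply: ler_sum => i _; exact: wd.
have hN : n.+1%:R = n%:R + 1 :> R by rewrite -natr1.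
have hepsN : eps * n.+1%:R = e by rewrite /eps mulfVK // gt_eqF.
have N0 : 0 <= n%:R :> R by exact: ler0n.
have en : enorm (v - w) < e.
  rewrite /enorm -(ger0_norm (ltW e0)) -sqrtr_sqr ltr_sqrt ?exprn_gt0 //.
  apply: le_lt_trans hs _; rewrite -mulr_natr; rewrite hN in hepsN; nra.
have hlb : has_lbound [set enorm (v - w0) | w0 in Sv vlo vhi].
  by exists 0 => _ [w0 _ <-]; exact: sqrtr_ge0.
have dle : dist_set v (Sv vlo vhi) <= enorm (v - w).
  by apply: (ge_inf hlb); exists w.
have dge : 0 <= dist_set v (Sv vlo vhi).
  apply: lb_le_inf; first by exists (enorm (v - w)); exists w.
  by move=> _ [w0 _ <-]; exact: sqrtr_ge0.
rewrite -/v sub0r normrN ger0_norm //; exact: le_lt_trans en.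
Qed.
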